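(* Assume (H3) and (H0)–(H2). Let $u\in USC(\mathbb T^N;\mathbb R^m)$ be a bounded viscosity subsolution of the stationary system (S). Then $u$ is Lipschitz continuous on $\mathbb T^N$ with a constant $L$ depending only on $H_1,\dots,H_m$, $D$ and $|u|_\infty$. If moreover $\sum_{j=1}^m d_{ij}(x)=0$ for all $x\in\mathbb T^N$ and all $i$, and $D(x)$ is irreducible for all $x\in\mathbb T^N$, then $L$ can be chosen independent of $|u|_\infty$ (depending only on $H_1,\dots,H_m$ and $D$).
   Context: $\mathbb T^N=\mathbb R^N/\mathbb Z^N$; $D(x)=(d_{ij}(x))_{1\le i,j\le m}$. (H3): each $d_{ij}$ continuous on $\mathbb T^N$, $d_{ii}\ge0$, $d_{ij}\le0$ for $i\ne j$, $\sum_j d_{ij}\ge0$. Irreducible: for every proper subset $\mathcal I\subsetneq\{1,\dots,m\}$ there exist $i\in\mathcal I$, $j\notin\mathcal I$ with $d_{ij}(x)\ne0$. $H_i(x,p)=F_i(x,p)-f_i(x)$ with (H0) $f_i,F_i$ continuous, $1$-periodic in $x$; (H1) $F_i(x,\cdot)$ convex, coercive ($\inf_xF_i(x,p)\to\infty$ as $|p|\to\infty$), $F_i(x,p)\ge F_i(x,0)=0$; (H2) $f_i\ge0$. System (S): $H_i(x,Du_i)+\sum_j d_{ij}(x)u_j=0$ in $\mathbb T^N$, $1\le i\le m$; viscosity subsolution: $u$ USC and whenever $\phi\in C^1$ and $u_i-\phi$ has a local max at $x$, $H_i(x,D\phi(x))+\sum_j d_{ij}(x)u_j(x)\le 0$.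 *)

(* Defs.v *)
From mathcomp Require Import all_boot.
From Stdlib Require Import Reals.
Set Implicit Arguments. Unset Strict Implicit. Unset Printing Implicit Defensive.
Local Open Scope R_scope.

Definition vec (N : nat) := 'I_N -> R.

Definition vsum (N : nat) (F : 'I_N -> R) : R := \big[Rplus/0]_(k < N) F k.

Definition dot (N : nat) (v w : vec N) : R := vsum (fun k => v k * w k).

Definition vnorm (N : nat) (v : vec N) : R := sqrt (dot v v).
Definition vsub (N : nat) (v w : vec N) : vec N := fun k => v k - w k.
Definition vdist (N : nat) (x y : vec N) : R := vnorm (vsub x y).

Definition vcomb (N : nat) (t : R) (p q : vec N) : vec N :=
  fun k => t * p k + (1 - t) * q k.

Definition shift (N : nat) (x : vec N) (k : 'I_N) : vec N :=
  fun j => if j == k then x j + 1 else x j.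

(* 1-periodic functions on R^N, i.e. functions on T^N = R^N / Z^N. *)
Definition periodic (N : nat) (g : vec N -> R) : Prop :=
  forall x k, g (shift x k) = g x.

Definition periodic_x (N : nat) (G : vec N -> vec N -> R) : Prop :=
  forall x k p, G (shift x k) p = G x p.

Definition continuous_on (N : nat) (g : vec N -> R) : Prop :=
  forall x eps, 0 < eps -> exists delta, 0 < delta /\
    forall y, vdist y x < delta -> Rabs (g y - g x) < eps.

Definition jointly_continuous (N : nat) (G : vec N -> vec N -> R) : Prop :=
  forall x p eps, 0 < eps -> exists delta, 0 < delta /\
    forall y q, vdist y x < delta -> vdist q p < delta ->
      Rabs (G y q - G x p) < eps.

Definition usc (N : nat) (g : vec N -> R) : Prop :=
  forall x eps, 0 < eps -> exists delta, 0 < delta /\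
    forall y, vdist y x < delta -> g y < g x + eps.

Definition is_C1 (N : nat) (phi : vec N -> R) (Dphi : vec N -> vec N) : Prop :=
  (forall x eps, 0 < eps -> exists delta, 0 < delta /\
     forall y, vdist y x < delta -> vdist (Dphi y) (Dphi x) < eps) /\
  (forall x eps, 0 < eps -> exists delta, 0 < delta /\
     forall y, vdist y x < delta ->
       Rabs (phi y - phi x - dot (Dphi x) (vsub y x)) <= eps * vdist y x).

Definition local_max (N : nat) (g : vec N -> R) (x : vec N) : Prop :=
  exists r, 0 < r /\ forall y, vdist y x < r -> g y <= g x.

Definition Ham (N m : nat) (F : 'I_m -> vec N -> vec N -> R)
  (f : 'I_m -> vec N -> R) (i : 'I_m) (x p : vec N) : R := F i x p - f i x.

(* Viscosity subsolution of (S):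
   H_i(x, Du_i) + sum_j d_ij(x) u_j = 0 in T^N.
   u is USC, 1-periodic, and for every C^1 test function phi such that
   u_i - phi has a local max at x, H_i(x, Dphi(x)) + sum_j d_ij(x) u_j(x) <= 0. *)
Definition visc_subsol (N m : nat) (F : 'I_m -> vec N -> vec N -> R)
  (f : 'I_m -> vec N -> R) (d : 'I_m -> 'I_m -> vec N -> R)
  (u : 'I_m -> vec N -> R) : Prop :=
  (forall i, usc (u i)) /\ (forall i, periodic (u i)) /\
  forall i phi Dphi x, is_C1 phi Dphi ->
    local_max (fun y => u i y - phi y) x ->
    Ham F f i x (Dphi x) + \big[Rplus/0]_(j < m) (d i j x * u j x) <= 0.

Definition H0 (N m : nat) (F : 'I_m -> vec N -> vec N -> R) (f : 'I_m -> vec N -> R) :=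
  forall i, continuous_on (f i) /\ periodic (f i) /\
            jointly_continuous (F i) /\ periodic_x (F i).

Definition H1 (N m : nat) (F : 'I_m -> vec N -> vec N -> R) :=
  forall i,
    (forall x p q t, 0 <= t <= 1 ->
       F i x (vcomb t p q) <= t * F i x p + (1 - t) * F i x q) /\
    (forall M, exists Rr, forall x p, Rr <= vnorm p -> M <= F i x p) /\
    (forall x p, F i x (fun _ => 0) <= F i x p) /\
    (forall x, F i x (fun _ => 0) = 0).

Definition H2 (N m : nat) (f : 'I_m -> vec N -> R) := forall i x, 0 <= f i x.

Definition H3 (N m : nat) (d : 'I_m -> 'I_m -> vec N -> R) :=
  (forall i j, continuous_on (d i j) /\ periodic (d i j)) /\
  (forall i x, 0 <= d i i x) /\
  (forall i j x, i != j -> d i j x <= 0) /\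
  (forall i x, 0 <= \big[Rplus/0]_(j < m) d i j x).

Definition irreducible_at (N m : nat) (d : 'I_m -> 'I_m -> vec N -> R) (x : vec N) :=
  forall I : {set 'I_m}, I != set0 -> I != setT ->
    exists i j, i \in I /\ j \notin I /\ d i j x <> 0.

(* u_i is L-Lipschitz on R^N (equivalently on T^N, u_i being periodic). *)
Definition lipschitz (N : nat) (L : R) (g : vec N -> R) :=
  forall x y, Rabs (g x - g y) <= L * vdist x y.

(* Main.v *)
Set Warnings "-notation-overridden".
Require Import Defs.
From HB Require Import structures.
From Stdlib Require Import ZArith.
From mathcomp Require Import all_boot.
From Stdlib Require Import Reals Lra Lia Classical ClassicalEpsilon FunctionalExtensionality.
Set Implicit Arguments. Unset Strict Implicit. Unset Printing Implicit Defensive.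
Local Open Scope R_scope.

HB.instance Definition Rplus_comlaw := Monoid.isComLaw.Build R 0 Rplus (fun a b c => esym (Rplus_assoc a b c)) Rplus_comm Rplus_0_l.

Section Sums.
Variable (I : Type) (r : seq I) (P : pred I).

Lemma sum_le (F G : I -> R) : (forall i, P i -> F i <= G i) ->
  \big[Rplus/0]_(i <- r | P i) F i <= \big[Rplus/0]_(i <- r | P i) G i.
Proof. move=> H; apply: (big_ind2 (fun a b => a <= b)) => //; [lra|]. move=> *; lra. Qed.

Lemma sum_nonneg (F : I -> R) : (forall i, P i -> 0 <= F i) ->
  0 <= \big[Rplus/0]_(i <- r | P i) F i.
Proof. move=> H; apply: (big_ind (fun a => 0 <= a)) => //; [lra|]. move=> *; lra. Qed.

Lemma sum_scal (c : R) (F : I -> R) :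
  \big[Rplus/0]_(i <- r | P i) (c * F i) = c * \big[Rplus/0]_(i <- r | P i) F i.
Proof. apply: (big_ind2 (fun a b => a = c * b)) => //; [ring|]. move=> ? ? ? ? -> ->; ring. Qed.

Lemma sum_add (F G : I -> R) :
  \big[Rplus/0]_(i <- r | P i) (F i + G i) = \big[Rplus/0]_(i <- r | P i) F i + \big[Rplus/0]_(i <- r | P i) G i.
Proof. by rewrite big_split. Qed.

Lemma sum_opp (F : I -> R) :
  \big[Rplus/0]_(i <- r | P i) (- F i) = - \big[Rplus/0]_(i <- r | P i) F i.
Proof. apply: (big_ind2 (fun a b => a = - b)) => //; [ring|]. move=> ? ? ? ? -> ->; ring. Qed.

Lemma sum_abs (F : I -> R) :
  Rabs (\big[Rplus/0]_(i <- r | P i) F i) <= \big[Rplus/0]_(i <- r | P i) Rabs (F i).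
Proof. apply: (big_ind2 (fun a b => Rabs a <= b)) => //. rewrite Rabs_R0; lra.
move=> x1 x2 y1 y2 h1 h2. apply: Rle_trans (Rabs_triang _ _) _. lra. move=> *; lra. Qed.
End Sums.

Lemma sumD1 (m : nat) (P : pred 'I_m) (F : 'I_m -> R) j : P j ->
  \big[Rplus/0]_(i < m | P i) F i = F j + \big[Rplus/0]_(i < m | P i && (i != j)) F i.
Proof. exact: bigD1. Qed.

Lemma sum_comb3 n (F G H K : 'I_n -> R) : (forall k, F k - G k - H k = K k) ->
  \big[Rplus/0]_(k<n) F k - \big[Rplus/0]_(k<n) G k - \big[Rplus/0]_(k<n) H k = \big[Rplus/0]_(k<n) K k.
Proof. move=> h. transitivity (\big[Rplus/0]_(k<n) (F k + - G k + - H k)).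
  rewrite !sum_add !sum_opp. reflexivity.
apply: eq_bigr => k _; rewrite -(h k); ring. Qed.

Lemma sum_const_ord (m : nat) (c : R) : \big[Rplus/0]_(i < m) c = INR m * c.
Proof. rewrite big_const_ord. elim: m => [|n IH] /=. ring. rewrite IH; case: n {IH} => [|n] /=; ring. Qed.

Lemma sum_pred_le (m : nat) (P : pred 'I_m) (F : 'I_m -> R) : (forall i, 0 <= F i) ->
  \big[Rplus/0]_(i < m | P i) F i <= \big[Rplus/0]_(i < m) F i.
Proof. move=> H. rewrite big_mkcond /=. apply: sum_le => i _. case: (P i); [lra | apply H]. Qed.
Goal forall n:nat, True. move=> n. have := S_INR n. Abort.

Section Vec.
Variable N : nat.
Implicit Types (v w a b x y z : vec N).

Lemma dot_nonneg v : 0 <= dot v v.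
Proof. apply: sum_nonneg => k _. apply: Rle_0_sqr. Qed.

Lemma vnorm_nonneg v : 0 <= vnorm v.
Proof. apply: sqrt_pos. Qed.

Lemma vnorm_sq v : vnorm v * vnorm v = dot v v.
Proof. apply: sqrt_sqrt. apply: dot_nonneg. Qed.

Lemma coord_sq_le v k : v k * v k <= dot v v.
Proof. rewrite /dot /vsum (bigD1 k) //=.
have : 0 <= \big[Rplus/0]_(i < N | i != k) (v i * v i) by apply: sum_nonneg => i _; apply: Rle_0_sqr.
move=> h. rewrite -{1}[v k * v k]Rplus_0_r. exact: Rplus_le_compat_l. Qed.

Lemma coord_le v k : Rabs (v k) <= vnorm v.
Proof. rewrite -sqrt_Rsqr_abs /vnorm. apply: sqrt_le_1_alt. apply: coord_sq_le. Qed.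

Lemma vnorm_le_sum v : vnorm v <= \big[Rplus/0]_(k < N) Rabs (v k).
Proof.
have [H1 H2] : (fun (q p : R) => 0 <= p /\ q <= p * p) (dot v v) (\big[Rplus/0]_(k < N) Rabs (v k)).
  rewrite /dot /vsum. apply: (big_ind2 (fun (q p : R) => 0 <= p /\ q <= p * p)).
  - lra.
  - move=> x1 x2 y1 y2 [h1 h2] [h3 h4]. split. lra. nra.
  - move=> k _. split. apply: Rabs_pos. rewrite -Rabs_mult. apply: Req_le. rewrite Rabs_right //. apply: Rle_ge. apply: Rle_0_sqr.
rewrite /vnorm -(sqrt_square _ H1). by apply: sqrt_le_1_alt.
Qed.

Lemma vnorm_scal c v : vnorm (fun k => c * v k) = Rabs c * vnorm v.
Proof. rewrite /vnorm /dot /vsum.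
have -> : \big[Rplus/0]_(k < N) (c * v k * (c * v k)) = (c * c) * \big[Rplus/0]_(k < N) (v k * v k).
  rewrite -sum_scal. apply: eq_bigr => k _; ring.
rewrite sqrt_mult_alt. 2: apply: Rle_0_sqr. by rewrite -sqrt_Rsqr_abs.
Qed.

Lemma vnorm_opp v : vnorm (fun k => - v k) = vnorm v.
Proof. have -> : (fun k => - v k) = (fun k => -1 * v k).
  by apply: functional_extensionality => k; ring.
rewrite vnorm_scal Rabs_Ropp Rabs_R1; ring. Qed.

Lemma vdist_sym x y : vdist x y = vdist y x.
Proof. rewrite /vdist -vnorm_opp /vsub. congr vnorm. apply: functional_extensionality => k; ring. Qed.

Lemma vdist_nonneg x y : 0 <= vdist x y.
Proof. apply: vnorm_nonneg. Qed.

Lemma dot_expand a b t : dot (fun k => a k + t * b k) (fun k => a k + t * b k) =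
  dot a a + 2 * t * dot a b + t * t * dot b b.
Proof. rewrite /dot /vsum -!sum_scal -!sum_add. apply: eq_bigr => k _; ring. Qed.

Lemma dot_comm a b : dot a b = dot b a.
Proof. rewrite /dot /vsum. apply: eq_bigr => k _; ring. Qed.

Lemma cauchy_schwarz a b : Rabs (dot a b) <= vnorm a * vnorm b.
Proof.
have HA := dot_nonneg a. have HB := dot_nonneg b.
have Hsq : dot a b * dot a b <= dot a a * dot b b.
  case: (Req_dec (dot b b) 0) => hb.
  - have hb0 : forall k, b k = 0.
      move=> k. have := coord_sq_le b k. rewrite hb => h. nra.
    have -> : dot a b = 0. rewrite /dot /vsum big1 // => k _. rewrite hb0; ring.
    rewrite hb; lra.
  - have hbp : 0 < dot b b by lra.
    have := dot_nonneg (fun k => a k + (- dot a b / dot b b) * b k).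
    rewrite dot_expand. set C := dot a b. set A := dot a a. set B := dot b b.
    move=> h.
    have := Rmult_le_pos _ _ h (Rlt_le _ _ hbp).
    have -> : (A + 2 * (- C / B) * C + - C / B * (- C / B) * B) * B = A * B - C * C .
      field. exact: Rgt_not_eq.
    lra.
rewrite -sqrt_Rsqr_abs /vnorm -sqrt_mult_alt //. by apply: sqrt_le_1_alt.
Qed.

Lemma vnorm_add a b : vnorm (fun k => a k + b k) <= vnorm a + vnorm b.
Proof.
have h := cauchy_schwarz a b.
have e : dot (fun k => a k + b k) (fun k => a k + b k) = dot a a + 2 * dot a b + dot b b.
  rewrite /dot /vsum -!sum_scal -!sum_add. apply: eq_bigr => k _; ring.
have na := vnorm_nonneg a. have nb := vnorm_nonneg b.
rewrite {1}/vnorm e -(sqrt_square (vnorm a + vnorm b)); last lra.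
apply: sqrt_le_1_alt. rewrite -(vnorm_sq a) -(vnorm_sq b).
have := Rle_abs (dot a b). nra.
Qed.

Lemma vdist_tri x y z : vdist x z <= vdist x y + vdist y z.
Proof. rewrite /vdist. have := vnorm_add (vsub x y) (vsub y z). rewrite /vsub.
have -> : (fun k => x k - y k + (y k - z k)) = (fun k => x k - z k).
  by apply: functional_extensionality => k; ring.
done. Qed.

Lemma vdist_self x : vdist x x = 0.
Proof. rewrite /vdist /vnorm /dot /vsum /vsub big1 ?sqrt_0 // => k _; ring. Qed.

Lemma vdist0 x y : vdist x y = 0 -> x = y.
Proof. move=> h. apply: functional_extensionality => k.
have := coord_le (vsub x y) k. rewrite -/(vdist x y) h /vsub => h2.
have := Rabs_pos (x k - y k). move=> h3. have : Rabs (x k - y k) = 0 by lra.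
move=> h4. case: (Req_dec (x k - y k) 0) => h5. lra. by have := Rabs_no_R0 _ h5. Qed.

Lemma coord_dist x y k : Rabs (x k - y k) <= vdist x y.
Proof. exact: (coord_le (vsub x y) k). Qed.

End Vec.

Section Cube.
Variable N : nat.
Implicit Types (a b y z : vec N).

Definition in_cube a b y := forall k, a k <= y k <= b k.
Definition upd (v : vec N) (k : 'I_N) (c : R) : vec N := fun j => if j == k then c else v j.
Variable Q : R -> vec N -> Prop.
Hypothesis Qmono : forall e e' y, e <= e' -> Q e y -> Q e' y.
Definition heavy a b := forall e, 0 < e -> exists y, in_cube a b y /\ Q e y.

Lemma split_step a b k : heavy a b -> a k <= b k ->
  heavy a (upd b k ((a k + b k)/2)) \/ heavy (upd a k ((a k + b k)/2)) b.
Proof.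
move=> H hk. apply: NNPP => /not_or_and [h1 h2].
destruct (not_all_ex_not _ _ h1) as [e1 h1']. destruct (imply_to_and _ _ h1') as [e1p h1''].
destruct (not_all_ex_not _ _ h2) as [e2 h2']. destruct (imply_to_and _ _ h2') as [e2p h2''].
clear h1 h2 h1' h2'. rename h1'' into h1. rename h2'' into h2.
have [y [hy hQ]] := H (Rmin e1 e2) (Rmin_pos _ _ e1p e2p).
case: (Rle_lt_dec (y k) ((a k + b k)/2)) => hyk.
- apply: h1. exists y. split; last by apply: Qmono hQ; apply: Rmin_l.
  move=> j. rewrite /upd. case: eqP => [->|_]. have := hy k. lra. apply: hy.
- apply: h2. exists y. split; last by apply: Qmono hQ; apply: Rmin_r.
  move=> j. rewrite /upd. case: eqP => [->|_]. have := hy k. lra. apply: hy.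
Qed.

Lemma halve_all a b : heavy a b -> (forall k, a k <= b k) -> exists a' b', heavy a' b' /\
  forall k, a k <= a' k /\ b' k <= b k /\ b' k - a' k = (b k - a k)/2.
Proof.
move=> H hab.
suff : forall j : nat, exists a' b', heavy a' b' /\ forall k : 'I_N,
   ((k < j)%nat -> a k <= a' k /\ b' k <= b k /\ b' k - a' k = (b k - a k)/2) /\
   (~~ (k < j)%nat -> a' k = a k /\ b' k = b k).
  case/(_ N) => a' [b' [h1 h2]]. exists a', b'; split => // k. by apply: (proj1 (h2 k)).
elim=> [|j [a' [b' [h1 h2]]]].
  by exists a, b; split => // k; split => // _; split.
case: (ltnP j N) => hj; last first.
  exists a', b'; split => // k. split.
  - move=> _. apply: (proj1 (h2 k)). by apply: leq_trans (ltn_ord k) hj.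
  - move=> h; exfalso; move/negP: h; apply. apply: ltnW. exact: leq_trans (ltn_ord k) hj.
pose k0 := Ordinal hj.
have [ea eb] := proj2 (h2 k0) (negbT (ltnn j)).
have hk0 : a' k0 <= b' k0 by rewrite ea eb; apply: hab.
have hne : forall k : 'I_N, k != k0 -> (k < j.+1)%nat = (k < j)%nat.
  move=> k hk. rewrite ltnS leq_eqVlt. have -> : (nat_of_ord k == j) = false. apply/negP => /eqP e.
    move/eqP: hk; apply. by apply: val_inj. by [].
have hk0j : (k0 < j.+1)%nat by exact: ltnSn.
case: (split_step h1 hk0) => hh.
- exists a', (upd b' k0 ((a' k0 + b' k0) / 2)); split => // k. rewrite /upd.
  case: (eqVneq k k0) => [->|hk].
  + rewrite hk0j. split => [_|//]. rewrite ea eb; have := hab k0; repeat split; lra.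
  + rewrite (hne k hk). apply: h2.
- exists (upd a' k0 ((a' k0 + b' k0) / 2)), b'; split => // k. rewrite /upd.
  case: (eqVneq k k0) => [->|hk].
  + rewrite hk0j. split => [_|//]. rewrite ea eb; have := hab k0; repeat split; lra.
  + rewrite (hne k hk). apply: h2.
Qed.

Lemma pow2_ge n : INR n <= 2 ^ n.
Proof. elim: n => [|n IH]. simpl; lra. rewrite S_INR. change (2 ^ n.+1) with (2 * 2 ^ n). have := pow_le 2 n. have : 1 <= 2 ^ n by apply: pow_R1_Rle; lra. lra. Qed.

Lemma cube_limit a b : (forall k, a k <= b k) -> heavy a b ->
  exists z, in_cube a b z /\ forall delta e, 0 < delta -> 0 < e ->
    exists y, vdist y z < delta /\ Q e y.
Proof.
move=> hab H.
have hstep : forall p : vec N * vec N, exists p' : vec N * vec N,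
   (heavy p.1 p.2 /\ (forall k, p.1 k <= p.2 k)) ->
   (heavy p'.1 p'.2 /\ forall k, p.1 k <= p'.1 k /\ p'.2 k <= p.2 k /\
        p'.2 k - p'.1 k = (p.2 k - p.1 k)/2).
  move=> [a0 b0]. case: (classic (heavy a0 b0 /\ (forall k, a0 k <= b0 k))) => /= h.
  - have [a' [b' [h1 h2]]] := halve_all (proj1 h) (proj2 h). by exists (a', b').
  - by exists (a0, b0).
pose nxt p := proj1_sig (constructive_indefinite_description _ (hstep p)).
have hnxt : forall p, (heavy p.1 p.2 /\ (forall k, p.1 k <= p.2 k)) ->
   (heavy (nxt p).1 (nxt p).2 /\ forall k, p.1 k <= (nxt p).1 k /\ (nxt p).2 k <= p.2 k /\
        (nxt p).2 k - (nxt p).1 k = (p.2 k - p.1 k)/2).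
  move=> p. exact: (proj2_sig (constructive_indefinite_description _ (hstep p))).
pose sq n := iter n nxt (a, b).
have inv : forall n, heavy (sq n).1 (sq n).2 /\ (forall k, (sq n).1 k <= (sq n).2 k) /\
   (forall k, (sq n).2 k - (sq n).1 k = (b k - a k) / 2 ^ n) /\
   (forall k, (sq n).1 k <= (sq n.+1).1 k /\ (sq n.+1).2 k <= (sq n).2 k).
  elim=> [|n [h1 [h2 [h3 h4]]]].
  - have [g1 g2] := hnxt (a, b) (conj H hab). rewrite /sq /=.
    split => //. split => //. split. move=> k /=; field. move=> k; case: (g2 k) => /= ? [? ?]; split; lra.
  - have [g1 g2] := hnxt (sq n) (conj h1 h2).
    have e : sq n.+1 = nxt (sq n) by [].
    rewrite e. split => //. split. move=> k; have := g2 k; have := h2 k; lra.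
    split. move=> k; have := g2 k; rewrite h3 /=. move=> [_ [_ ->]]. field. apply: pow_nonzero; lra.
    have g5 : forall k, (nxt (sq n)).1 k <= (nxt (sq n)).2 k.
      move=> k; have := g2 k; have := h2 k; lra.
    have [g3 g4] := hnxt (nxt (sq n)) (conj g1 g5).
    have e2 : sq n.+2 = nxt (nxt (sq n)) by []. rewrite e2. move=> k; have := g4 k; lra.
have monoa : forall n p k, (sq n).1 k <= (sq (n + p)%nat).1 k.
  move=> n p k; elim: p => [|p IH]. rewrite addn0; lra.
  rewrite addnS. have := proj2 (proj2 (proj2 (inv (n + p)%nat))) k. lra.
have monob : forall n p k, (sq (n + p)%nat).2 k <= (sq n).2 k.
  move=> n p k; elim: p => [|p IH]. rewrite addn0; lra.
  rewrite addnS. have := proj2 (proj2 (proj2 (inv (n + p)%nat))) k. lra.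
have ab : forall n n' k, (sq n).1 k <= (sq n').2 k.
  move=> n n' k. case: (leqP n n') => hn.
  - rewrite -(subnKC hn). have := monoa n (n' - n)%nat k. have := proj1 (proj2 (inv (n + (n' - n))%nat)) k. lra.
  - have hn' : (n' <= n)%nat by apply: ltnW. rewrite -(subnKC hn').
    have := monob n' (n - n')%nat k. have := proj1 (proj2 (inv (n' + (n - n'))%nat)) k. lra.
pose E k := fun r => exists n, r = (sq n).1 k.
have bnd : forall k, bound (E k).
  move=> k. exists ((sq 0%nat).2 k) => r [n ->]. apply: ab.
have ne : forall k, exists r, E k r. move=> k. exists ((sq 0%nat).1 k), 0%nat. done.
pose z k := proj1_sig (completeness (E k) (bnd k) (ne k)).
have hz : forall k, is_lub (E k) (z k). move=> k. exact: proj2_sig (completeness (E k) (bnd k) (ne k)).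
have zin : forall n k, (sq n).1 k <= z k <= (sq n).2 k.
  move=> n k. split. apply: (proj1 (hz k)). by exists n.
  apply: (proj2 (hz k)) => r [n' ->]. apply: ab.
exists z. split.
  move=> k. have := zin 0%nat k. rewrite /sq /=. done.
move=> delta e hd he.
pose W := \big[Rplus/0]_(k < N) (b k - a k).
have hW : 0 <= W by apply: sum_nonneg => k _; have := hab k; lra.
have [n [hn1 hn2]] := archimed_cor1 (delta / (W + 1)) ltac:(apply: Rdiv_lt_0_compat; lra).
have hnp : 0 < INR n by apply: lt_0_INR.
have h2n : 0 < 2 ^ n by apply: pow_lt; lra.
have [y [hy hQ]] := proj1 (inv n) e he.
exists y. split => //.
apply: Rle_lt_trans (vnorm_le_sum _) _.
apply: (Rle_lt_trans _ (\big[Rplus/0]_(k < N) ((b k - a k) * / 2 ^ n))).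
  apply: sum_le => k _. rewrite /vsub. have := hy k. have := zin n k.
  have := proj1 (proj2 (proj2 (inv n))) k. rewrite /Rdiv => <- ? ?. apply: Rabs_le; lra.
have -> : \big[Rplus/0]_(k < N) ((b k - a k) * / 2 ^ n) = / 2 ^ n * W.
  rewrite /W -sum_scal. apply: eq_bigr => k _; ring.
have h1 : / 2 ^ n <= / INR n. apply: Rinv_le_contravar => //. apply: pow2_ge.
have h3 : / INR n * (W + 1) < delta.
  have := Rmult_lt_compat_r (W + 1) _ _ ltac:(lra) hn1. rewrite /Rdiv Rmult_assoc Rinv_l; lra.
have : 0 <= / 2 ^ n by apply: Rlt_le; apply: Rinv_0_lt_compat.
nra.
Qed.
End Cube.

Section Apps.
Variable N : nat.
Implicit Types (a b x y z : vec N).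

Lemma exists_max (psi : vec N -> R) : usc psi -> (exists T0, forall y, psi y <= T0) ->
  forall x0 a b, (forall k, a k <= b k) -> (forall y, ~ in_cube a b y -> psi y <= psi x0 - 1) ->
  exists z, forall y, psi y <= psi z.
Proof.
move=> hu [T0 hT0] x0 a b hab hout.
pose E := fun r => exists y, r = psi y.
have hb : bound E. exists T0 => r [y ->]. apply: hT0.
have [T hT] := completeness E hb (ex_intro _ (psi x0) (ex_intro _ x0 erefl)).
have hub : forall y, psi y <= T. move=> y. apply: (proj1 hT). by exists y.
have hT1 : psi x0 <= T by apply: hub.
pose Q := fun (e : R) (y : vec N) => T - e < psi y.
have Qm : forall e e' y, e <= e' -> Q e y -> Q e' y. rewrite /Q => *; lra.
have hv : heavy Q a b.
  move=> e he. pose e' := Rmin e 1.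
  have he' : 0 < e' by apply: Rmin_pos; lra.
  have [y hy] : exists y, T - e' < psi y.
    apply: NNPP => hn. have : T <= T - e'. apply: (proj2 hT) => r [y ->].
      apply: Rnot_lt_le => h. apply: hn. by exists y.
    lra.
  exists y. split.
  - apply: NNPP => hn. have := hout y hn. have := Rmin_r e 1. rewrite -/e'. lra.
  - rewrite /Q. have := Rmin_l e 1. rewrite -/e'. lra.
have [z [hz hz2]] := cube_limit Qm hab hv.
exists z. move=> y. apply: Rle_trans (hub y) _.
apply: Rnot_lt_le => hlt.
pose eps := (T - psi z) / 2.
have heps : 0 < eps by rewrite /eps; lra.
have [delta [hd hd2]] := hu z eps heps.
have [w [hw hQ]] := hz2 delta eps hd heps.
have := hd2 w hw. rewrite /Q in hQ. rewrite /eps in hQ *. lra.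
Qed.

Definition addk x (k : 'I_N) c : vec N := fun j => if j == k then x j + c else x j.

Lemma per_addk_nat g : periodic g -> forall x k (n : nat), g (addk x k (INR n)) = g x.
Proof. move=> hg x k. elim=> [|n IH].
- have -> : addk x k (INR 0) = x. apply: functional_extensionality => j. rewrite /addk /=. case: (j == k) => //; ring.
  done.
- have -> : addk x k (INR n.+1) = Defs.shift (addk x k (INR n)) k.
    apply: functional_extensionality => j. rewrite /addk /Defs.shift. case: (j == k) => //. rewrite S_INR. ring.
  by rewrite hg.
Qed.

Lemma per_addk g : periodic g -> forall x k (n : Z), g (addk x k (IZR n)) = g x.
Proof. move=> hg x k n. case: (Z_le_gt_dec 0%Z n) => hn.
- rewrite -(Z2Nat.id n hn) -INR_IZR_INZ. by apply: per_addk_nat.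
- have e : n = (- Z.of_nat (Z.to_nat (- n)))%Z. rewrite Z2Nat.id; lia.
  rewrite e opp_IZR -INR_IZR_INZ. set c := INR _.
  rewrite -(per_addk_nat hg (addk x k (- c)) k (Z.to_nat (- n))). congr g.
  apply: functional_extensionality => j. rewrite /addk. case: (j == k) => //. rewrite /c; ring.
Qed.

Lemma per_vec g : periodic g -> forall x (zz : 'I_N -> Z), g (fun j => x j + IZR (zz j)) = g x.
Proof. move=> hg x zz.
suff : forall j : nat, g (fun i : 'I_N => if (i < j)%nat then x i + IZR (zz i) else x i) = g x.
  move/(_ N). congr (g _ = _). apply: functional_extensionality => i. by rewrite ltn_ord.
elim=> [|j IH].
  by f_equal.
case: (ltnP j N) => hj; last first.
  rewrite -IH. congr g. apply: functional_extensionality => i.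
  have h1 : (i < j)%nat by exact: leq_trans (ltn_ord i) hj.
  by rewrite h1 ltnS (ltnW h1).
pose k0 := Ordinal hj.
rewrite -IH -(per_addk hg (fun i : 'I_N => if (i < j)%nat then x i + IZR (zz i) else x i) k0 (zz k0)). congr g. apply: functional_extensionality => i.
rewrite /addk. case: (eqVneq i k0) => [->|hk].
- by rewrite /= ltnSn ltnn.
- have -> : (i < j.+1)%nat = (i < j)%nat.
    rewrite ltnS leq_eqVlt. have -> : (nat_of_ord i == j) = false. apply/negP => /eqP e.
      move/eqP: hk; apply. by apply: val_inj. by [].
  done.
Qed.

Definition red y : vec N := fun k => y k + IZR (1 - up (y k)).

Lemma red_in y : in_cube (fun _ => 0) (fun _ => 1) (red y).
Proof. move=> k. rewrite /red minus_IZR. have [h1 h2] := archimed (y k). lra. Qed.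

Lemma red_per g : periodic g -> forall y, g (red y) = g y.
Proof. move=> hg y. exact: per_vec. Qed.

Lemma unit_le : forall k : 'I_N, (fun _ : 'I_N => 0) k <= (fun _ : 'I_N => 1) k.
Proof. move=> k /=; lra. Qed.

Lemma bounded_cp g : continuous_on g -> periodic g -> exists B, forall y, Rabs (g y) <= B.
Proof. move=> hc hp. apply: NNPP => hn.
have Qm : forall e e' y, e <= e' -> 1 < e * Rabs (g y) -> 1 < e' * Rabs (g y).
  move=> e e' y h1 h2. have := Rabs_pos (g y). nra.
have hv : heavy (fun e y => 1 < e * Rabs (g y)) (fun _ => 0) (fun _ => 1).
  move=> e he. apply: NNPP => h2. apply: hn. exists (/ e) => y.
  rewrite -(red_per hp). apply: Rnot_lt_le => h3. apply: h2. exists (red y). split; first by apply: red_in.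
  have := Rmult_lt_compat_l e _ _ he h3. rewrite Rinv_r; lra.
have [z [_ hz]] := cube_limit Qm unit_le hv.
have [delta [hd hd2]] := hc z 1 Rlt_0_1.
have he : 0 < / (Rabs (g z) + 1). apply: Rinv_0_lt_compat. have := Rabs_pos (g z). lra.
have [y [hy hQ]] := hz delta _ hd he.
have := hd2 y hy. have := Rabs_triang_inv (g y) (g z).
have hgz := Rabs_pos (g z).
move=> h0 h0'. have h1 : Rabs (g y) < Rabs (g z) + 1 by lra.
have := Rmult_lt_compat_l _ _ _ he h1. rewrite Rinv_l; lra.
Qed.
End Apps.

Section Quad.
Variable N : nat.
Implicit Types (x y z : vec N).

Lemma quad_C1 (x0 : vec N) (c e0 : R) :
  is_C1 (fun z => c * dot (vsub z x0) (vsub z x0) + e0) (fun z k => 2 * c * (z k - x0 k)).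
Proof. split.
- move=> z eps he. exists (eps / (Rabs (2 * c) + 1)). split.
    apply: Rdiv_lt_0_compat => //. have := Rabs_pos (2 * c); lra.
  move=> y hy. rewrite /vdist.
  have -> : vsub (fun k => 2 * c * (y k - x0 k)) (fun k => 2 * c * (z k - x0 k)) = (fun k => (2 * c) * vsub y z k).
    apply: functional_extensionality => k; rewrite /vsub; ring.
  rewrite vnorm_scal -/(vdist y z).
  have ha := Rabs_pos (2 * c). have hv := vdist_nonneg y z.
  have : (Rabs (2 * c) + 1) * vdist y z < eps.
    have := Rmult_lt_compat_l (Rabs (2 * c) + 1) _ _ ltac:(lra) hy. rewrite /Rdiv.
    rewrite (Rmult_comm eps) -Rmult_assoc Rinv_r; lra.
  nra.
- move=> z eps he. exists (eps / (Rabs c + 1)). split.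
    apply: Rdiv_lt_0_compat => //. have := Rabs_pos c; lra.
  move=> y hy.
  have -> : c * dot (vsub y x0) (vsub y x0) + e0 - (c * dot (vsub z x0) (vsub z x0) + e0) -
     dot (fun k => 2 * c * (z k - x0 k)) (vsub y z) = c * (vdist y z * vdist y z).
    rewrite /vdist vnorm_sq /dot /vsum /vsub.
    rewrite -!sum_scal. rewrite (_ : forall a b e, a + e - (b + e) = a - b); last by move=> *; ring.
    apply: sum_comb3 => k; ring.
  rewrite Rabs_mult. have ha := Rabs_pos c. have hv := vdist_nonneg y z.
  have e1 : Rabs (vdist y z * vdist y z) = vdist y z * vdist y z.
    apply: Rabs_right. apply: Rle_ge. apply: Rmult_le_pos => //.
  rewrite e1.
  have : (Rabs c + 1) * vdist y z < eps.
    have := Rmult_lt_compat_l (Rabs c + 1) _ _ ltac:(lra) hy. rewrite /Rdiv.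
    rewrite (Rmult_comm eps) -Rmult_assoc Rinv_r; lra.
  nra.
Qed.

Lemma vdist_cont x : forall z eps, 0 < eps -> exists delta, 0 < delta /\
  forall y, vdist y z < delta -> Rabs (vdist y x - vdist z x) < eps.
Proof. move=> z eps he. exists eps; split => // y hy.
have := vdist_tri y z x. have := vdist_tri z y x. rewrite (vdist_sym z y).
move=> h1 h2. apply: Rabs_def1; lra. Qed.
End Quad.

Section Lip.
Variables (N m : nat) (F : 'I_m -> vec N -> vec N -> R) (f : 'I_m -> vec N -> R)
  (d : 'I_m -> 'I_m -> vec N -> R).

Lemma not_in_cube (a b y : vec N) : ~ in_cube a b y -> exists k, y k < a k \/ b k < y k.
Proof. move=> h. have [k hk] := not_all_ex_not _ _ h. exists k.
case: (Rlt_le_dec (y k) (a k)) => h1; first by left.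
case: (Rlt_le_dec (b k) (y k)) => h2; first by right. by exfalso; apply: hk. Qed.

Lemma lip_half (i : 'I_m) (u : 'I_m -> vec N -> R) (L Cf G B : R) :
  0 < L ->
  (forall x p, L <= vnorm p -> Cf + G + 1 <= F i x p) ->
  visc_subsol F f d u ->
  (forall x, Rabs (u i x) <= B) ->
  (forall x, f i x <= Cf) ->
  (forall z, - G <= \big[Rplus/0]_(j < m) (d i j z * u j z)) ->
  forall x y, u i y - u i x <= L * vdist y x.
Proof.
move=> hL hF [husc [hper hsub]] hB hf hG x.
pose psi z := u i z - L * vdist z x.
have hpsi_usc : usc psi.
  move=> z eps he. have [d1 [hd1 h1]] := husc i z (eps / 2) ltac:(lra).
  exists (Rmin d1 (eps / (2 * L))). split. apply: Rmin_pos => //. apply: Rdiv_lt_0_compat; lra.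
  move=> y hy. have hy1 : vdist y z < d1 by apply: Rlt_le_trans hy (Rmin_l _ _).
  have hy2 : vdist y z < eps / (2 * L) by apply: Rlt_le_trans hy (Rmin_r _ _).
  have := h1 y hy1. have := vdist_tri z y x. rewrite (vdist_sym z y).
  have : L * vdist y z < eps / 2.
    have := Rmult_lt_compat_l L _ _ hL hy2. have -> : L * (eps / (2 * L)) = eps / 2 by field; lra. done.
  rewrite /psi. nra.
have hbx := hB x. have hB0 : 0 <= B by have := Rabs_pos (u i x); lra.
have hbnd : exists T0, forall y, psi y <= T0.
  exists B => y. rewrite /psi. have := hB y. have := vdist_nonneg y x. have := Rle_abs (u i y). nra.
pose R0 := (2 * B + 1) / L.
have hR0 : 0 < R0 by apply: Rdiv_lt_0_compat; lra.
have hout : forall y, ~ in_cube (fun k => x k - R0) (fun k => x k + R0) y -> psi y <= psi x - 1.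
  move=> y /not_in_cube [k hk].
  have h1 : R0 < Rabs (y k - x k). case: hk => hk. rewrite Rabs_left; lra. rewrite Rabs_right; lra.
  have h2 : R0 < vdist y x by apply: Rlt_le_trans h1 (coord_dist y x k).
  have hLR : L * R0 = 2 * B + 1 by rewrite /R0; field; lra.
  rewrite /psi vdist_self. have := hB y. have := Rle_abs (u i y). have := Rabs_pos (u i x).
  have := Rle_abs (- u i x). rewrite Rabs_Ropp. have := Rmult_lt_compat_l L _ _ hL h2. lra.
have hab : forall k, (fun k => x k - R0) k <= (fun k => x k + R0) k by move=> k /=; lra.
have [z hz] := exists_max hpsi_usc hbnd hab hout.
move=> y. have := hz y. rewrite /psi.
have hr := vdist_nonneg z x.
case: (Req_dec (vdist z x) 0) => hr0.
  move/vdist0: hr0 => ->. rewrite vdist_self. lra.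
have hrp : 0 < vdist z x by lra.
set r := vdist z x in hr hr0 hrp *.
pose c := L / (2 * r).
have hc : 0 < c by apply: Rdiv_lt_0_compat; lra.
pose phi := fun w => c * dot (vsub w x) (vsub w x) + L * r / 2.
pose Dphi := fun (w : vec N) (k : 'I_N) => 2 * c * (w k - x k).
have hC1 : is_C1 phi Dphi by apply: quad_C1.
have hphi : forall w, L * vdist w x <= phi w.
  move=> w. rewrite /phi -vnorm_sq -/(vdist w x). have := vdist_nonneg w x.
  set a := vdist w x. move=> ha.
  have : 0 <= c * ((a - r) * (a - r)) by apply: Rmult_le_pos; [lra | apply: Rle_0_sqr].
  have -> : c * ((a - r) * (a - r)) = c * (a * a) + L * r / 2 - L * a.
    rewrite /c; field; lra.
  lra.
have hphiz : phi z = L * r.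
  rewrite /phi -vnorm_sq -/(vdist z x) -/r /c. field; lra.
have hmax : local_max (fun w => u i w - phi w) z.
  exists 1; split; first lra. move=> w _ /=. have := hz w. rewrite /psi hphiz -/r. have := hphi w. lra.
have := hsub i phi Dphi z hC1 hmax.
have hnorm : vnorm (Dphi z) = L.
  rewrite /Dphi. change (vnorm (fun k => (2 * c) * vsub z x k) = L).
  rewrite vnorm_scal -/(vdist z x) -/r Rabs_right; last lra. rewrite /c; field; lra.
have := hF z (Dphi z) ltac:(lra). have := hf z. have := hG z. rewrite /Ham. lra.
Qed.
End Lip.

Lemma fin_ub (T : finType) (P : T -> R -> Prop) :
  (forall t B B', B <= B' -> P t B -> P t B') -> (forall t, exists B, P t B) -> exists B, forall t, P t B.
Proof. move=> hm hex.
suff : forall s : seq T, exists B, forall t, t \in s -> P t B.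
  case/(_ (enum T)) => B hB. exists B => t. apply: hB. by rewrite mem_enum.
elim=> [|a s [B IH]]. by exists 0.
have [Ba hBa] := hex a. exists (Rmax Ba B) => t. rewrite in_cons => /orP [/eqP ->|ht].
- apply: hm hBa. apply: Rmax_l.
- apply: hm (IH t ht). apply: Rmax_r.
Qed.

Lemma fin_lb (T : finType) (P : T -> R -> Prop) :
  (forall t B B', 0 < B' <= B -> P t B -> P t B') -> (forall t, exists B, 0 < B /\ P t B) ->
  exists B, 0 < B /\ forall t, P t B.
Proof. move=> hm hex.
suff : forall s : seq T, exists B, 0 < B /\ forall t, t \in s -> P t B.
  case/(_ (enum T)) => B [hB0 hB]. exists B; split => // t. apply: hB. by rewrite mem_enum.
elim=> [|a s [B [hB0 IH]]]. by exists 1; split => //; lra.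
have [Ba [hBa0 hBa]] := hex a. exists (Rmin Ba B); split. by apply: Rmin_pos.
move=> t. rewrite in_cons => /orP [/eqP ->|ht].
- apply: hm hBa. split. by apply: Rmin_pos. apply: Rmin_l.
- apply: hm (IH t ht). split. by apply: Rmin_pos. apply: Rmin_r.
Qed.

Section Cont.
Variable N : nat.
Implicit Types (g h : vec N -> R).

Lemma cont_ext g h : (forall y, g y = h y) -> continuous_on g -> continuous_on h.
Proof. move=> e hg x eps he. have [dl [hd H]] := hg x eps he. exists dl; split => // y hy.
rewrite -!e. by apply: H. Qed.

Lemma cont_const c : continuous_on (fun _ : vec N => c).
Proof. move=> x eps he. exists 1; split; first lra. move=> y _. rewrite Rminus_diag Rabs_R0. lra. Qed.

Lemma cont_add g h : continuous_on g -> continuous_on h -> continuous_on (fun y => g y + h y).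
Proof. move=> hg hh x eps he.
have [d1 [hd1 H1]] := hg x (eps/2) ltac:(lra). have [d2 [hd2 H2]] := hh x (eps/2) ltac:(lra).
exists (Rmin d1 d2); split. by apply: Rmin_pos.
move=> y hy. have := H1 y (Rlt_le_trans _ _ _ hy (Rmin_l _ _)). have := H2 y (Rlt_le_trans _ _ _ hy (Rmin_r _ _)).
have := Rabs_triang (g y - g x) (h y - h x).
have -> : g y + h y - (g x + h x) = g y - g x + (h y - h x) by ring. lra. Qed.

Lemma cont_opp g : continuous_on g -> continuous_on (fun y => - g y).
Proof. move=> hg x eps he. have [dl [hd H]] := hg x eps he. exists dl; split => // y hy.
rewrite (_ : - g y - - g x = - (g y - g x)); last ring. rewrite Rabs_Ropp. by apply: H. Qed.

Lemma cont_mult g h : continuous_on g -> continuous_on h -> continuous_on (fun y => g y * h y).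
Proof. move=> hg hh x eps he.
pose e1 := Rmin 1 (eps / (2 * (Rabs (h x) + 1))).
pose e2 := eps / (2 * (Rabs (g x) + 2)).
have hgx := Rabs_pos (g x). have hhx := Rabs_pos (h x).
have he1 : 0 < e1. apply: Rmin_pos; first lra. apply: Rdiv_lt_0_compat; lra.
have he2 : 0 < e2 by apply: Rdiv_lt_0_compat; lra.
have [d1 [hd1 H1]] := hg x e1 he1. have [d2 [hd2 H2]] := hh x e2 he2.
exists (Rmin d1 d2); split. by apply: Rmin_pos.
move=> y hy. have A1 := H1 y (Rlt_le_trans _ _ _ hy (Rmin_l _ _)). have A2 := H2 y (Rlt_le_trans _ _ _ hy (Rmin_r _ _)).
have -> : g y * h y - g x * h x = g y * (h y - h x) + h x * (g y - g x) by ring.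
apply: Rle_lt_trans (Rabs_triang _ _) _. rewrite !Rabs_mult.
have hgy : Rabs (g y) <= Rabs (g x) + 1.
  have := Rabs_triang_inv (g y) (g x). have := Rmin_l 1 (eps / (2 * (Rabs (h x) + 1))). rewrite -/e1. lra.
have t1 : Rabs (g y) * Rabs (h y - h x) <= (Rabs (g x) + 1) * e2.
  apply: Rmult_le_compat; try apply: Rabs_pos; lra.
have t2 : Rabs (h x) * Rabs (g y - g x) <= Rabs (h x) * (eps / (2 * (Rabs (h x) + 1))).
  apply: Rmult_le_compat_l => //. have := Rmin_r 1 (eps / (2 * (Rabs (h x) + 1))). rewrite -/e1. lra.
have t3 : (Rabs (g x) + 1) * e2 < eps / 2.
  rewrite /e2. apply: (Rmult_lt_reg_r (2 * (Rabs (g x) + 2))); first lra.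
  field_simplify; lra.
have t4 : Rabs (h x) * (eps / (2 * (Rabs (h x) + 1))) < eps / 2.
  apply: (Rmult_lt_reg_r (2 * (Rabs (h x) + 1))); first lra.
  field_simplify; lra.
lra.
Qed.

Lemma cont_sum (I : Type) (r : seq I) (G : I -> vec N -> R) : (forall k, continuous_on (G k)) ->
  continuous_on (fun y => \big[Rplus/0]_(k <- r) G k y).
Proof. move=> hG. elim: r => [|a s IH].
- apply: cont_ext (cont_const 0) => y. by rewrite big_nil.
- apply: cont_ext (cont_add (hG a) IH) => y. by rewrite big_cons.
Qed.

Lemma lip_cont L g : lipschitz L g -> continuous_on g.
Proof. move=> hl x eps he. exists (eps / (Rabs L + 1)). split.
  apply: Rdiv_lt_0_compat => //. have := Rabs_pos L; lra.
move=> y hy. apply: Rle_lt_trans (hl y x) _.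
have hv := vdist_nonneg y x. have hL := Rabs_pos L.
have : (Rabs L + 1) * vdist y x < eps.
  have := Rmult_lt_compat_l (Rabs L + 1) _ _ ltac:(lra) hy. rewrite /Rdiv.
  rewrite (Rmult_comm eps) -Rmult_assoc Rinv_r; lra.
have := Rle_abs L. nra.
Qed.
End Cont.

Section Touch.
Variables (N m : nat) (F : 'I_m -> vec N -> vec N -> R) (f : 'I_m -> vec N -> R)
  (d : 'I_m -> 'I_m -> vec N -> R).

Lemma usc_sub (g h : vec N -> R) : usc g -> continuous_on h -> usc (fun y => g y - h y).
Proof. move=> hg hh z eps he.
have [d1 [hd1 H1]] := hg z (eps/2) ltac:(lra). have [d2 [hd2 H2]] := hh z (eps/2) ltac:(lra).
exists (Rmin d1 d2); split. by apply: Rmin_pos.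
move=> y hy. have := H1 y (Rlt_le_trans _ _ _ hy (Rmin_l _ _)). have := H2 y (Rlt_le_trans _ _ _ hy (Rmin_r _ _)).
move=> h1 h2. have := Rle_abs (h z - h y). rewrite -Rabs_Ropp. rewrite (_ : - (h z - h y) = h y - h z); last ring.
lra. Qed.

Lemma touch_near (g : vec N -> R) B : usc g -> (forall x, Rabs (g x) <= B) ->
  forall x0 eta, 0 < eta -> exists z phi Dphi, vdist z x0 < eta /\ is_C1 phi Dphi /\
    local_max (fun w => g w - phi w) z.
Proof. move=> hu hB x0 eta he.
have hB0 : 0 <= B by have := hB x0; have := Rabs_pos (g x0); lra.
pose K := (2 * B + 1) / (eta * eta).
have hK : 0 < K. apply: Rdiv_lt_0_compat; nra.
pose phi := fun w => K * dot (vsub w x0) (vsub w x0) + 0.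
pose Dphi := fun (w : vec N) (k : 'I_N) => 2 * K * (w k - x0 k).
have hC1 : is_C1 phi Dphi by apply: quad_C1.
have hphi : forall w, phi w = K * (vdist w x0 * vdist w x0).
  move=> w. by rewrite /phi /vdist vnorm_sq Rplus_0_r.
have hcont : continuous_on phi.
  apply: cont_ext (cont_mult (cont_const K) (cont_mult (vdist_cont x0) (vdist_cont x0))) => w.
  by rewrite hphi.
pose psi := fun w => g w - phi w.
have hpu : usc psi by apply: usc_sub.
have hbnd : exists T0, forall y, psi y <= T0.
  exists B => y. rewrite /psi hphi. have := hB y. have := Rle_abs (g y).
  have : 0 <= K * (vdist y x0 * vdist y x0) by apply: Rmult_le_pos; [lra|apply: Rle_0_sqr].
  lra.
have hKe : K * (eta * eta) = 2 * B + 1 by rewrite /K; field; lra.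
have hab : forall k, (fun k => x0 k - eta) k <= (fun k => x0 k + eta) k by move=> k /=; lra.
have hout : forall y, ~ in_cube (fun k => x0 k - eta) (fun k => x0 k + eta) y -> psi y <= psi x0 - 1.
  move=> y /not_in_cube [k hk].
  have h1 : eta < Rabs (y k - x0 k). case: hk => hk. rewrite Rabs_left; lra. rewrite Rabs_right; lra.
  have h2 : eta < vdist y x0 by apply: Rlt_le_trans h1 (coord_dist y x0 k).
  have h3 : eta * eta < vdist y x0 * vdist y x0 by nra.
  rewrite /psi !hphi vdist_self. have := hB y. have := Rle_abs (g y). have := hB x0.
  have := Rle_abs (- g x0). rewrite Rabs_Ropp. have := Rmult_lt_compat_l K _ _ hK h3. lra.
have [z hz] := exists_max hpu hbnd hab hout.
exists z, phi, Dphi. split; last split => //.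
- have := hz x0. rewrite /psi !hphi vdist_self. have := hB z. have := Rle_abs (g z). have := hB x0.
  have := Rle_abs (- g x0). rewrite Rabs_Ropp. move=> *.
  have h4 : K * (vdist z x0 * vdist z x0) < K * (eta * eta) by lra.
  have h5 : vdist z x0 * vdist z x0 < eta * eta. apply: (Rmult_lt_reg_l K) => //.
  have := vdist_nonneg z x0. nra.
- exists 1; split; first lra. move=> w _ /=. exact: hz.
Qed.

Lemma pw_ineq (j : 'I_m) (u : 'I_m -> vec N -> R) B : visc_subsol F f d u -> H1 F ->
  (forall k x, Rabs (u k x) <= B) -> (forall k, continuous_on (u k)) ->
  (forall k, continuous_on (d j k)) -> continuous_on (f j) ->
  forall x, \big[Rplus/0]_(k < m) (d j k x * u k x) <= f j x.
Proof. move=> [husc [hper hsub]] hH1 hB hu hd hf x.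
pose S := fun y => \big[Rplus/0]_(k < m) (d j k y * u k y) + - f j y.
have hS : continuous_on S.
  apply: cont_add (cont_opp hf). apply: cont_sum => k. exact: cont_mult.
apply: Rnot_lt_le => hlt.
have hSx : 0 < S x by rewrite /S; lra.
have [dl [hdl H]] := hS x (S x) hSx.
have [z [phi [Dphi [hz [hC1 hmax]]]]] := touch_near (husc j) (hB j) x hdl.
have := hsub j phi Dphi z hC1 hmax. rewrite /Ham.
have [_ [_ [h3 h4]]] := hH1 j. have := h3 z (Dphi z). rewrite h4.
have := H z hz. have := Rle_abs (S z - S x). rewrite -Rabs_Ropp. have := Rle_abs (- (S z - S x)).
rewrite /S. lra.
Qed.
End Touch.

Lemma argmax_fin (T : finType) (t0 : T) (v : T -> R) : exists i0, forall j, v j <= v i0.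
Proof.
suff : forall s : seq T, exists i0, forall j, j \in s -> v j <= v i0.
  case/(_ (enum T)) => i0 h. exists i0 => j. apply: h. by rewrite mem_enum.
elim=> [|a s [i0 IH]]. by exists t0.
case: (Rle_lt_dec (v a) (v i0)) => h.
- exists i0 => j. rewrite in_cons => /orP [/eqP ->|hj] //. exact: IH.
- exists a => j. rewrite in_cons => /orP [/eqP ->|hj]. lra. have := IH j hj. lra.
Qed.

Fixpoint cseq (Cf A dl : R) (m : nat) (n : nat) : R :=
  match n with O => 0 | S n' => cseq Cf A dl m n' + (Cf + INR m * A * cseq Cf A dl m n') / dl end.

Lemma cseq_nonneg Cf A dl m n : 0 <= Cf -> 0 <= A -> 0 < dl -> 0 <= cseq Cf A dl m n.
Proof. move=> h1 h2 h3. elim: n => [|n IH] /=. lra.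
have : 0 <= (Cf + INR m * A * cseq Cf A dl m n) / dl.
  apply: Rmult_le_pos; last by apply: Rlt_le; apply: Rinv_0_lt_compat.
  have := Rmult_le_pos _ _ (Rmult_le_pos _ _ (pos_INR m) h2) IH; lra.
lra. Qed.

Lemma cseq_mono Cf A dl m n : 0 <= Cf -> 0 <= A -> 0 < dl -> cseq Cf A dl m n <= cseq Cf A dl m n.+1.
Proof. move=> h1 h2 h3 /=. have := cseq_nonneg m n h1 h2 h3.
have : 0 <= (Cf + INR m * A * cseq Cf A dl m n) / dl.
  apply: Rmult_le_pos; last by apply: Rlt_le; apply: Rinv_0_lt_compat.
  have := Rmult_le_pos _ _ (Rmult_le_pos _ _ (pos_INR m) h2) (cseq_nonneg m n h1 h2 h3); lra.
lra. Qed.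

Lemma osc_bound (m : nat) (D : 'I_m -> 'I_m -> R) (v : 'I_m -> R) (Cf A dl : R) :
  0 <= Cf -> 0 <= A -> 0 < dl ->
  (forall i, \big[Rplus/0]_(j < m) D i j = 0) -> (forall i j, i != j -> D i j <= 0) ->
  (forall i j, Rabs (D i j) <= A) ->
  (forall I : {set 'I_m}, I != set0 -> I != setT -> exists i j, i \in I /\ j \notin I /\ dl <= Rabs (D i j)) ->
  (forall i, \big[Rplus/0]_(j < m) (D i j * v j) <= Cf) ->
  forall i k, v k - v i <= cseq Cf A dl m m.
Proof.
move=> hCf hA hdl hsum hoff hbd hirr hS i k.
have [i0 hi0] := argmax_fin i v.
pose V := v i0. pose c := cseq Cf A dl m.
have hc0 : forall n, 0 <= c n by move=> n; apply: cseq_nonneg.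
have claim : forall n, exists I : {set 'I_m}, ((n.+1 <= #|I|)%nat \/ I = setT) /\
    forall j, j \in I -> V - c n <= v j.
  elim=> [|n [I [hI1 hI2]]].
  - exists [set i0]. split. by left; rewrite cards1.
    move=> j; rewrite in_set1 => /eqP ->. rewrite /V /c /=. lra.
  - case: (classic (I = setT)) => hT.
    + exists I. split; first by right. move=> j hj. have := hI2 j hj.
      have := cseq_mono m n hCf hA hdl. rewrite -/c. lra.
    + have hcard : (n.+1 <= #|I|)%nat by case: hI1.
      have hne : I != set0 by rewrite -card_gt0; apply: leq_trans hcard.
      have hnT : I != setT by apply/eqP.
      have [i1 [j1 [hi1 [hj1 hD]]]] := hirr I hne hnT.
      have hij : i1 != j1 by apply/eqP => e; move: hj1; rewrite -e hi1.
      have hvi1 := hI2 i1 hi1.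
      pose Z := Cf + INR m * A * c n.
      have hZ : 0 <= Z by have := Rmult_le_pos _ _ (Rmult_le_pos _ _ (pos_INR m) hA) (hc0 n); rewrite /Z; lra.
      have hT1 : \big[Rplus/0]_(j < m) (D i1 j * (v j - v i1)) <= Cf.
        have -> : \big[Rplus/0]_(j < m) (D i1 j * (v j - v i1)) =
            \big[Rplus/0]_(j < m) (D i1 j * v j) + - (v i1 * \big[Rplus/0]_(j < m) D i1 j).
          rewrite -sum_scal -sum_opp -sum_add. apply: eq_bigr => j _; ring.
        rewrite hsum. have := hS i1. lra.
      rewrite (@sumD1 m xpredT _ j1) // in hT1.
      have hrest : - (INR m * (A * c n)) <= \big[Rplus/0]_(j < m | xpredT j && (j != j1)) (D i1 j * (v j - v i1)).
        rewrite -sum_const_ord -sum_opp.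
        apply: Rle_trans (_ : _ <= \big[Rplus/0]_(j < m | xpredT j && (j != j1)) (- (A * c n))) _.
          rewrite !sum_opp. apply: Ropp_le_contravar. apply: sum_pred_le => j.
          apply: Rmult_le_pos => //.
        apply: sum_le => j _. case: (eqVneq j i1) => [->|hji]. rewrite Rminus_diag Rmult_0_r.
          have := Rmult_le_pos _ _ hA (hc0 n). lra.
        have h1 := hoff i1 j (ltac:(by rewrite eq_sym)).
        have h2 : - A <= D i1 j by have := hbd i1 j; have := Rle_abs (- D i1 j); rewrite Rabs_Ropp; lra.
        have h3 : v j - v i1 <= c n by have := hi0 j; rewrite -/V; lra.
        have := hc0 n. nra.
      have hD1 : D i1 j1 <= 0 := hoff i1 j1 hij.
      have hD2 : dl <= - D i1 j1 by rewrite Rabs_left1 in hD.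
      have hw : v i1 - v j1 <= Z / dl.
        case: (Rle_lt_dec (v i1 - v j1) 0) => hw0.
          have : 0 <= Z / dl by apply: Rmult_le_pos => //; apply: Rlt_le; apply: Rinv_0_lt_compat.
          lra.
        apply: (Rmult_le_reg_l dl) => //. rewrite /Rdiv (Rmult_comm Z) -Rmult_assoc Rinv_r; last lra.
        have : D i1 j1 * (v j1 - v i1) <= Z by rewrite /Z; lra.
        nra.
      exists (j1 |: I). split.
        left. rewrite cardsU1 hj1. by [].
      move=> j. rewrite in_setU1 => /orP [/eqP ->|hj].
      * rewrite /c /=. rewrite -/c -/Z. lra.
      * have := hI2 j hj. have := cseq_mono m n hCf hA hdl. rewrite -/c. lra.
have [I [hI1 hI2]] := claim m.
have hIT : I = setT.
  case: hI1 => // h. exfalso. have := max_card (mem I). rewrite card_ord => h2.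
  have := leq_trans h h2. by rewrite ltnn.
have := hI2 i. rewrite hIT in_setT => /(_ isT). have := hi0 k. rewrite -/V /c. lra.
Qed.

Lemma irr_unif (N m : nat) (d : 'I_m -> 'I_m -> vec N -> R) :
  (forall i j, continuous_on (d i j) /\ periodic (d i j)) -> (forall x, irreducible_at d x) ->
  exists dl, 0 < dl /\ forall (I : {set 'I_m}) x, I != set0 -> I != setT ->
    exists i j, i \in I /\ j \notin I /\ dl <= Rabs (d i j x).
Proof. move=> hcp hirr.
apply: (@fin_lb _ (fun I dl => forall x, I != set0 -> I != setT ->
    exists i j, i \in I /\ j \notin I /\ dl <= Rabs (d i j x))).
  move=> I B B' hB h x h1 h2. have [i [j [h3 [h4 h5]]]] := h x h1 h2. exists i, j. split => //. split => //. lra.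
move=> I. apply: NNPP => hn.
pose Q := fun e y => forall i j, i \in I -> j \notin I -> Rabs (d i j y) < e.
have Qm : forall e e' y, e <= e' -> Q e y -> Q e' y.
  move=> e e' y h1 h2 i j hi hj. have := h2 i j hi hj. lra.
have hv : heavy Q (fun _ => 0) (fun _ => 1).
  move=> e he. apply: NNPP => h2. apply: hn. exists e. split => // x h3 h4.
  apply: NNPP => h5. apply: h2. exists (red x). split; first by apply: red_in.
  move=> i j hi hj. rewrite red_per; last by case: (hcp i j).
  apply: Rnot_le_lt => h6. apply: h5. by exists i, j.
have [z [_ hz]] := cube_limit Qm (@unit_le N) hv.
have hnT : I != set0 /\ I != setT.
  split; apply: NNPP => /negP /negPn /eqP e; apply: hn; exists 1; split; try lra;
  move=> x h1 h2; by rewrite e eqxx in h1 h2.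
have [i [j [hi [hj hd]]]] := hirr z I (proj1 hnT) (proj2 hnT).
have hpos : 0 < Rabs (d i j z) / 2 by have := Rabs_pos_lt _ hd; lra.
have [dl [hdl H]] := proj1 (hcp i j) z _ hpos.
have [y [hy hQ]] := hz dl _ hdl hpos.
have := hQ i j hi hj. have := H y hy. have := Rabs_triang_inv (d i j z) (d i j y).
rewrite -(Rabs_Ropp (d i j z - d i j y)) (_ : - (d i j z - d i j y) = d i j y - d i j z); last ring.
lra.
Qed.

Theorem lemma3p4 (N m : nat) (F : 'I_m -> vec N -> vec N -> R)
  (f : 'I_m -> vec N -> R) (d : 'I_m -> 'I_m -> vec N -> R)
  (hH0 : H0 F f) (hH1 : H1 F) (hH2 : H2 f) (hH3 : H3 d) :
  (forall M : R, exists L : R, 0 <= L /\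
     forall u : 'I_m -> vec N -> R, visc_subsol F f d u ->
       (forall i x, Rabs (u i x) <= M) ->
       forall i, lipschitz L (u i)) /\
  ((forall i x, \big[Rplus/0]_(j < m) d i j x = 0) ->
   (forall x, irreducible_at d x) ->
   exists L : R, 0 <= L /\
     forall u : 'I_m -> vec N -> R, visc_subsol F f d u ->
       (exists B, forall i x, Rabs (u i x) <= B) ->
       forall i, lipschitz L (u i)).
Proof.
have [Cf0 hCf0] : exists B, forall i x, Rabs (f i x) <= B.
  apply: (@fin_ub _ (fun i B => forall x, Rabs (f i x) <= B)).
    move=> i B B' h1 h2 x. have := h2 x. lra.
  move=> i. have [h1 [h2 _]] := hH0 i. exact: bounded_cp.
pose Cf := Rmax 0 Cf0.
have hCf : 0 <= Cf by apply: Rmax_l.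
have hfC : forall i x, f i x <= Cf.
  move=> i x. have := hCf0 i x. have := Rle_abs (f i x). have := Rmax_r 0 Cf0. rewrite -/Cf. lra.
have [A0 hA0] : exists B, forall i j x, Rabs (d i j x) <= B.
  apply: (@fin_ub _ (fun i B => forall j x, Rabs (d i j x) <= B)).
    move=> i B B' h1 h2 j x. have := h2 j x. lra.
  move=> i. apply: (@fin_ub _ (fun j B => forall x, Rabs (d i j x) <= B)).
    move=> j B B' h1 h2 x. have := h2 x. lra.
  move=> j. have [h1 h2] := proj1 hH3 i j. exact: bounded_cp.
pose A := Rmax 0 A0.
have hA : 0 <= A by apply: Rmax_l.
have hdA : forall i j x, Rabs (d i j x) <= A.
  move=> i j x. have := hA0 i j x. have := Rmax_r 0 A0. rewrite -/A. lra.
have coerc : forall G, exists L, 0 < L /\ forall i x p, L <= vnorm p -> Cf + G + 1 <= F i x p.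
  move=> G. have [L hL] : exists L, forall i x p, L <= vnorm p -> Cf + G + 1 <= F i x p.
    apply: (@fin_ub _ (fun i L => forall x p, L <= vnorm p -> Cf + G + 1 <= F i x p)).
      move=> i B B' h1 h2 x p h3. apply: h2. lra.
    move=> i. have [_ [h _]] := hH1 i. exact: h.
  exists (Rmax 1 L). split. have := Rmax_l 1 L. lra.
  move=> i x p h. apply: hL. have := Rmax_r 1 L. lra.
have lip_from : forall G, exists L, 0 <= L /\ forall u B, visc_subsol F f d u ->
    (forall i x, Rabs (u i x) <= B) -> (forall i z, - G <= \big[Rplus/0]_(j < m) (d i j z * u j z)) ->
    forall i, lipschitz L (u i).
  move=> G. have [L [hL0 hL]] := coerc G. exists L. split; first lra.
  move=> u B hu hB hG i x y.
  have h1 := lip_half (hL0) (hL i) hu (hB i) (hfC i) (hG i) x y.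
  have h2 := lip_half (hL0) (hL i) hu (hB i) (hfC i) (hG i) y x.
  rewrite (vdist_sym y x) in h1. apply: Rabs_le. lra.
have part1 : forall M : R, exists L : R, 0 <= L /\
     forall u : 'I_m -> vec N -> R, visc_subsol F f d u ->
       (forall i x, Rabs (u i x) <= M) ->
       forall i, lipschitz L (u i).
  move=> M. have [L [hL0 hL]] := lip_from (INR m * (A * M)). exists L. split => //.
  move=> u hu hM. apply: (hL u M hu hM) => i z.
  rewrite -sum_const_ord -sum_opp. apply: sum_le => j _.
  have := Rabs_mult (d i j z) (u j z). have := Rmult_le_compat _ _ _ _ (Rabs_pos _) (Rabs_pos _) (hdA i j z) (hM j z).
  have := Rle_abs (- (d i j z * u j z)). rewrite Rabs_Ropp. lra.
split => // hsum0 hirr.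
have [dl [hdl hdl2]] := irr_unif (proj1 hH3) hirr.
pose K := cseq Cf A dl m m.
have hK : 0 <= K by apply: cseq_nonneg.
have [L [hL0 hL]] := lip_from (INR m * (A * K)).
exists L. split => //. move=> u hu [B hB].
have [L1 [_ hL1]] := part1 B.
have hcont : forall k, continuous_on (u k) by move=> k; apply: (lip_cont (hL1 u hu hB k)).
have hpw : forall j x, \big[Rplus/0]_(k < m) (d j k x * u k x) <= Cf.
  move=> j x. apply: Rle_trans (hfC j x).
  apply: (pw_ineq hu hH1 hB hcont) => [k|]. exact: (proj1 (proj1 hH3 j k)). exact: (proj1 (hH0 j)).
have hosc : forall x i k, u k x - u i x <= K.
  move=> x. apply: (osc_bound (D := fun i j => d i j x) (v := fun k => u k x)).
  - exact: hCf.
  - exact: hA.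
  - exact: hdl.
  - move=> i. exact: (hsum0 i x).
  - move=> i j hij. exact: (proj1 (proj2 (proj2 hH3)) i j x hij).
  - move=> i j. exact: hdA.
  - move=> I h1 h2. exact: hdl2.
  - move=> i. exact: hpw.
apply: (hL u B hu hB) => i z.
have -> : \big[Rplus/0]_(j < m) (d i j z * u j z) = \big[Rplus/0]_(j < m) (d i j z * (u j z - u i z)).
  have -> : \big[Rplus/0]_(j < m) (d i j z * (u j z - u i z)) =
      \big[Rplus/0]_(j < m) (d i j z * u j z) + - (u i z * \big[Rplus/0]_(j < m) d i j z).
    rewrite -sum_scal -sum_opp -sum_add. apply: eq_bigr => j _; ring.
  rewrite hsum0. ring.
rewrite -sum_const_ord -sum_opp. apply: sum_le => j _.
case: (eqVneq j i) => [->|hji]. rewrite Rminus_diag Rmult_0_r. have := Rmult_le_pos _ _ hA hK. lra.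
have h1 := proj1 (proj2 (proj2 hH3)) i j z (ltac:(by rewrite eq_sym)).
have h2 : - A <= d i j z by have := hdA i j z; have := Rle_abs (- d i j z); rewrite Rabs_Ropp; lra.
have h3 := hosc z i j.
nra.
Qed.
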